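(* Let $\mathcal{A}=\mathcal{A}(R,\boldsymbol{\sigma},\boldsymbol{t})$ be a twisted generalized Weyl algebra with $R$ commutative, and let $M$ be a simple weight $\mathcal{A}$-module. Then $M$ has no inner breaks if and only if for every $\mathfrak{m}\in\mathrm{Supp}(M)$ and every homogeneous element $a\in\mathcal{A}$ (with respect to the $\mathbb{Z}^n$-gradation) with $aM_\mathfrak{m}\neq0$ we have $a^\ast a\notin\mathfrak{m}$.
   Context: Setup: $\Bbbk$ a field, $R$ a commutative unital $\Bbbk$-algebra, $\sigma_1^{1/2},\dots,\sigma_n^{1/2}$ commuting automorphisms ($\sigma_i=(\sigma_i^{1/2})^2$), $t_1,\dots,t_n\in R$ regular satisfying the consistency equations $\sigma_j^{1/2}(t_i)\sigma_i^{1/2}(t_j)=\sigma_j^{-1/2}(t_i)\sigma_i^{-1/2}(t_j)$ ($i\ne j$), $\sigma_i^{1/2}\sigma_j^{1/2}(t_k)\sigma_i^{-1/2}\sigma_j^{-1/2}(t_k)=\sigma_i^{1/2}\sigma_j^{-1/2}(t_k)\sigma_i^{-1/2}\sigma_j^{1/2}(t_k)$ ($i,j,k$ distinct). $\tilde{\mathcal{A}}$ is obtained from $R$ by adjoining $X_i^\pm$ with $X_i^\pm r=\sigma_i^{\pm1}(r)X_i^\pm$, $X_i^\pm X_i^\mp=\sigma_i^{\pm1/2}(t_i)$, $[X_i^\pm,X_j^\mp]=0$ ($i\ne j$), $\mathbb{Z}^n$-graded with $\deg R=0$, $\deg X_i^\pm=\pm\mathbf{e}_i$; $\mathcal{A}$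 is $\tilde{\mathcal{A}}$ modulo the sum of graded ideals meeting the degree-zero part trivially, with $\mathcal{A}_0=R$. $\ast$ is the anti-involution with $r^\ast=r$, $(X_i^\pm)^\ast=X_i^\mp$. A weight module is $M=\bigoplus_{\mathfrak{m}\in\mathrm{Specm}(R)}M_\mathfrak{m}$ with $M_\mathfrak{m}=\{v:\mathfrak{m}v=0\}$; $\mathrm{Supp}(M)=\{\mathfrak{m}:M_\mathfrak{m}\ne0\}$. A simple weight module $M$ has no inner breaks if for every $\mathfrak{m}\in\mathrm{Supp}(M)$ and every monomial $a=rX_{i_1}^{\varepsilon_1}\cdots X_{i_k}^{\varepsilon_k}$ ($r\in R$) with $aM_\mathfrak{m}\ne0$ one has $a^\ast a\notin\mathfrak{m}$. *)

(* Defs.v *)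
From HB Require Import structures.
From Stdlib Require List.
From mathcomp Require Import all_boot all_order all_algebra.
Set Implicit Arguments. Unset Strict Implicit. Unset Printing Implicit Defensive.
Import Order.TTheory GRing.Theory Num.Theory.
Local Open Scope ring_scope.

(* sh i = sigma_i^{1/2}, shi i = sigma_i^{-1/2}                        *)

Definition is_kalg_aut (k : fieldType) (R : comAlgType k) (f g : R -> R) : Prop :=
  [/\ (forall x y, f (x + y) = f x + f y),
      (forall x y, f (x * y) = f x * f y),
      f 1 = 1,
      (forall (c : k) x, f (c *: x) = c *: f x) &
      (cancel f g /\ cancel g f)].

Definition sigma_ (R : Type) (sh : R -> R) := fun r => sh (sh r).

Definition TGWA_data (k : fieldType) (R : comAlgType k) (n : nat)
    (sh shi : 'I_n -> R -> R) (t : 'I_n -> R) : Prop :=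
  [/\ (forall i, is_kalg_aut (sh i) (shi i)),
      (forall i j r, sh i (sh j r) = sh j (sh i r)),
      (forall i, GRing.lreg (t i)),
      (forall i j : 'I_n, i != j ->
          sh j (t i) * sh i (t j) = shi j (t i) * shi i (t j)) &
      (forall i j l : 'I_n, i != j -> j != l -> i != l ->
          sh i (sh j (t l)) * shi i (shi j (t l))
          = sh i (shi j (t l)) * shi i (sh j (t l)))].

(* A word is a sequence of letters (i, true) = X_i^+, (i, false) = X_i^- *)

Definition letter (A : nzRingType) (n : nat) (Xp Xm : 'I_n -> A)
    (p : 'I_n * bool) : A := if p.2 then Xp p.1 else Xm p.1.

Definition mono (A : nzRingType) (n : nat) (Xp Xm : 'I_n -> A)
    (w : seq ('I_n * bool)) : A := \prod_(p <- w) letter Xp Xm p.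

Definition degw (n : nat) (w : seq ('I_n * bool)) : {ffun 'I_n -> int} :=
  [ffun i => (count (pred1 (i, true)) w)%:Z - (count (pred1 (i, false)) w)%:Z].

(* a is homogeneous of degree g: a is an R-linear combination
   sum_j r_j X_{w_j} of monomials of degree g (this is the component A_g
   of the gradation induced by deg R = 0, deg X_i^{+-} = +- e_i) *)
Definition homog (R : comNzRingType) (A : nzRingType) (n : nat)
    (iota : R -> A) (Xp Xm : 'I_n -> A) (g : {ffun 'I_n -> int}) (a : A) : Prop :=
  exists s : seq (R * seq ('I_n * bool)),
    (forall p, List.In p s -> degw p.2 = g) /\
    a = \sum_(p <- s) iota p.1 * mono Xp Xm p.2.

Definition is_ideal2 (A : nzRingType) (J : A -> Prop) : Prop :=
  [/\ J 0, (forall x y, J x -> J y -> J (x - y)) &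
      (forall a x, J x -> J (a * x) /\ J (x * a))].

Definition graded_set (R : comNzRingType) (A : nzRingType) (n : nat)
    (iota : R -> A) (Xp Xm : 'I_n -> A) (J : A -> Prop) : Prop :=
  forall s : seq ({ffun 'I_n -> int} * A),
    uniq (map fst s) ->
    (forall p, List.In p s -> homog iota Xp Xm p.1 p.2) ->
    J (\sum_(p <- s) p.2) -> forall p, List.In p s -> J p.2.

(* A (with iota : R -> A and generators Xp, Xm) is the twisted generalized
   Weyl algebra A(R, sigma, t), characterized up to isomorphism:
   - iota is an injective ring morphism, and the defining relations hold;
   - A is spanned by the R-monomials (i.e. generated by R and the X_i^{+-});
   - the induced Z^n-gradation is a direct sum decomposition;
   - A_0 = R;
   - every graded two-sided ideal meeting A_0 = R trivially is zero
     (i.e. the maximal such ideal of the algebra ~A has been factored out). *)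
Definition is_TGWA (k : fieldType) (R : comAlgType k) (n : nat)
    (sh shi : 'I_n -> R -> R) (t : 'I_n -> R)
    (A : nzRingType) (iota : R -> A) (Xp Xm : 'I_n -> A) : Prop :=
  [/\ [/\ (forall x y, iota (x + y) = iota x + iota y),
          (forall x y, iota (x * y) = iota x * iota y),
          iota 1 = 1 & injective iota],
      [/\ (forall i r, Xp i * iota r = iota (sigma_ (sh i) r) * Xp i),
          (forall i r, Xm i * iota r = iota (sigma_ (shi i) r) * Xm i),
          (forall i, Xp i * Xm i = iota (sh i (t i))),
          (forall i, Xm i * Xp i = iota (shi i (t i))) &
          (forall i j, i != j -> Xp i * Xm j = Xm j * Xp i) /\
          (forall i j, i != j -> Xm i * Xp j = Xp j * Xm i)],
      (forall a : A, exists s : seq (R * seq ('I_n * bool)),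
          a = \sum_(p <- s) iota p.1 * mono Xp Xm p.2) /\
      (forall s : seq ({ffun 'I_n -> int} * A),
          uniq (map fst s) ->
          (forall p, List.In p s -> homog iota Xp Xm p.1 p.2) ->
          \sum_(p <- s) p.2 = 0 -> forall p, List.In p s -> p.2 = 0),
      (forall a, homog iota Xp Xm 0 a -> exists r, a = iota r) &
      (forall J : A -> Prop, is_ideal2 J -> graded_set iota Xp Xm J ->
          (forall r, J (iota r) -> iota r = 0) -> forall a, J a -> a = 0)].

Definition is_star (R : comNzRingType) (A : nzRingType) (n : nat)
    (iota : R -> A) (Xp Xm : 'I_n -> A) (star : A -> A) : Prop :=
  [/\ (forall a b, star (a + b) = star a + star b),
      (forall a b, star (a * b) = star b * star a),
      (forall a, star (star a) = a),
      (forall r, star (iota r) = iota r) &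
      (forall i, star (Xp i) = Xm i) /\
      (forall i, star (Xm i) = Xp i)].

Definition is_ideal1 (R : comNzRingType) (m : R -> Prop) : Prop :=
  [/\ m 0, (forall x y, m x -> m y -> m (x - y)) & (forall r x, m x -> m (r * x))].

Definition is_max_ideal (R : comNzRingType) (m : R -> Prop) : Prop :=
  [/\ is_ideal1 m, ~ m 1 &
      (forall J, is_ideal1 J -> (forall x, m x -> J x) ->
          J 1 \/ (forall x, J x -> m x))].

Definition weight_vec (R : comNzRingType) (A : nzRingType) (iota : R -> A)
    (M : lmodType A) (m : R -> Prop) (v : M) : Prop :=
  forall r, m r -> iota r *: v = 0.

Definition is_weight_module (R : comNzRingType) (A : nzRingType)
    (iota : R -> A) (M : lmodType A) : Prop :=
  forall v : M, exists s : seq ((R -> Prop) * M),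
    (forall p, List.In p s -> is_max_ideal p.1 /\ weight_vec iota p.1 p.2) /\
    v = \sum_(p <- s) p.2.

Definition in_supp (R : comNzRingType) (A : nzRingType) (iota : R -> A)
    (M : lmodType A) (m : R -> Prop) : Prop :=
  is_max_ideal m /\ exists v : M, weight_vec iota m v /\ v != 0.

Definition is_submodule (A : nzRingType) (M : lmodType A) (S : M -> Prop) : Prop :=
  [/\ S 0, (forall u v, S u -> S v -> S (u + v)) & (forall a v, S v -> S (a *: v))].

Definition is_simple (A : nzRingType) (M : lmodType A) : Prop :=
  (exists v : M, v != 0) /\
  forall S : M -> Prop, is_submodule S -> (forall v, S v -> v = 0) \/ (forall v, S v).

Definition acts_nonzero (R : comNzRingType) (A : nzRingType) (iota : R -> A)
    (M : lmodType A) (a : A) (m : R -> Prop) : Prop :=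
  exists v : M, weight_vec iota m v /\ a *: v != 0.

(* x \notin m, where x \in A_0 = R is identified with an element of R *)
Definition notin_ideal (R : comNzRingType) (A : nzRingType) (iota : R -> A)
    (m : R -> Prop) (x : A) : Prop :=
  ~ (exists r, m r /\ iota r = x).

Definition no_inner_breaks (R : comNzRingType) (A : nzRingType) (n : nat)
    (iota : R -> A) (Xp Xm : 'I_n -> A) (star : A -> A) (M : lmodType A) : Prop :=
  forall m, in_supp iota M m ->
  forall (r : R) (w : seq ('I_n * bool)),
    acts_nonzero iota M (iota r * mono Xp Xm w) m ->
    notin_ideal iota m (star (iota r * mono Xp Xm w) * (iota r * mono Xp Xm w)).

(* Main.v *)
From Stdlib Require List.
From Stdlib Require Import Classical.
Require Import Defs.
From HB Require Import structures.
From mathcomp Require Import all_boot all_order all_algebra.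
From mathcomp Require Import zify.
Set Implicit Arguments. Unset Strict Implicit. Unset Printing Implicit Defensive.
Import Order.TTheory GRing.Theory Num.Theory.
Local Open Scope ring_scope.

Lemma degw_cat (n : nat) (u v : seq ('I_n * bool)) :
  degw (u ++ v) = degw u + degw v.
Proof.
apply/ffunP => i; rewrite !ffunE !count_cat !PoszD.
by rewrite addrACA opprD.
Qed.

Lemma degw_nil (n : nat) : degw ([::] : seq ('I_n * bool)) = 0.
Proof. by apply/ffunP => i; rewrite !ffunE. Qed.

Lemma degw_flip (n : nat) (x : 'I_n * bool) :
  degw [:: (x.1, ~~ x.2)] = - degw [:: x].
Proof.
apply/ffunP => i; rewrite !ffunE /=; case: x => j [] /=;
rewrite !xpair_eqE /=; case: (j == i) => /=; lia.
Qed.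

Section Main.
Variables (k : fieldType) (R : comAlgType k) (n : nat)
  (sh shi : 'I_n -> R -> R) (A : nzRingType) (iota : R -> A)
  (Xp Xm : 'I_n -> A) (star : A -> A).
Hypothesis iotaD : forall x y, iota (x + y) = iota x + iota y.
Hypothesis iotaM : forall x y, iota (x * y) = iota x * iota y.
Hypothesis iota1 : iota 1 = 1.
Hypothesis A0 : forall a, homog iota Xp Xm 0 a -> exists r, a = iota r.
Hypothesis XpR : forall i r, Xp i * iota r = iota (sigma_ (sh i) r) * Xp i.
Hypothesis XmR : forall i r, Xm i * iota r = iota (sigma_ (shi i) r) * Xm i.
Hypothesis shK : forall i x, shi i (sh i x) = x.
Hypothesis shiK : forall i x, sh i (shi i x) = x.
Hypothesis starD : forall a b, star (a + b) = star a + star b.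
Hypothesis starM : forall a b, star (a * b) = star b * star a.
Hypothesis starK : forall a, star (star a) = a.
Hypothesis starI : forall r, star (iota r) = iota r.
Hypothesis starXp : forall i, star (Xp i) = Xm i.
Hypothesis starXm : forall i, star (Xm i) = Xp i.

Local Notation mono := (mono Xp Xm).
Local Notation homog := (homog iota Xp Xm).

Lemma iota0 : iota 0 = 0.
Proof. by apply: (addrI (iota 0)); rewrite -iotaD !addr0. Qed.

Lemma iotaN x : iota (- x) = - iota x.
Proof. by apply: (addrI (iota x)); rewrite -iotaD !subrr iota0. Qed.

Lemma iotaB x y : iota (x - y) = iota x - iota y.
Proof. by rewrite iotaD iotaN. Qed.

Lemma iotaC x y : iota x * iota y = iota y * iota x.
Proof. by rewrite -!iotaM mulrC. Qed.

Lemma star0 : star 0 = 0.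
Proof. by apply: (addrI (star 0)); rewrite -starD !addr0. Qed.

Lemma star1 : star 1 = 1.
Proof. by rewrite -iota1 starI. Qed.

Lemma mono_nil : mono [::] = 1.
Proof. by rewrite /Defs.mono big_nil. Qed.

Lemma mono_cons x w : mono (x :: w) = letter Xp Xm x * mono w.
Proof. by rewrite /Defs.mono big_cons. Qed.

Lemma mono_cat u v : mono (u ++ v) = mono u * mono v.
Proof.
elim: u => [|x u IH] /=; first by rewrite mono_nil mul1r.
by rewrite !mono_cons IH mulrA.
Qed.

Definition sigl (x : 'I_n * bool) := if x.2 then sigma_ (sh x.1) else sigma_ (shi x.1).
Definition sigr (x : 'I_n * bool) := if x.2 then sigma_ (shi x.1) else sigma_ (sh x.1).

Fixpoint twl (w : seq ('I_n * bool)) r :=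
  if w is x :: w' then sigl x (twl w' r) else r.
Fixpoint twr (w : seq ('I_n * bool)) r :=
  if w is x :: w' then twr w' (sigr x r) else r.

Lemma monoR w r : mono w * iota r = iota (twl w r) * mono w.
Proof.
elim: w r => [|x w IH] r /=; first by rewrite mono_nil mulr1 mul1r.
rewrite mono_cons -mulrA IH mulrA mulrA; congr (_ * _).
by case: x => i [] /=; rewrite /letter /= ?XpR ?XmR.
Qed.

Lemma monoL w r : iota r * mono w = mono w * iota (twr w r).
Proof.
elim: w r => [|x w IH] r /=; first by rewrite mono_nil mulr1 mul1r.
rewrite mono_cons mulrA (_ : iota r * letter Xp Xm x = letter Xp Xm x * iota (sigr x r)).
  by rewrite -mulrA IH mulrA.
by case: x => i [] /=; rewrite /letter /= ?XpR ?XmR /sigma_ ?shK ?shiK.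
Qed.

Lemma homog0 g : homog g 0.
Proof. by exists [::]; split => //; rewrite big_nil. Qed.

Lemma homogD g a c : homog g a -> homog g c -> homog g (a + c).
Proof.
move=> [s [Hs Ea]] [s' [Hs' Ec]]; rewrite Ea Ec; exists (s ++ s'); split; last by rewrite big_cat.
by move=> p Hp; case: (List.in_app_or _ _ _ Hp) => [/Hs|/Hs'].
Qed.

Lemma homog_term g r w : degw w = g -> homog g (iota r * mono w).
Proof.
move=> Hw; exists [:: (r, w)]; split; last by rewrite big_cons big_nil addr0.
by move=> p [<-|[]].
Qed.

Lemma homog_ind g (P : A -> Prop) : P 0 -> (forall a c, P a -> P c -> P (a + c)) ->
  (forall r w, degw w = g -> P (iota r * mono w)) -> forall a, homog g a -> P a.
Proof.
move=> P0 PD Pt a [s [Hs Ea]]; rewrite Ea; clear Ea; elim: s Hs => [|p s IH] Hs; first by rewrite big_nil.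
rewrite big_cons; apply: PD; first by apply: Pt; apply: Hs; left.
by apply: IH => q Hq; apply: Hs; right.
Qed.

Lemma homogM g h a c : homog g a -> homog h c -> homog (g + h) (a * c).
Proof.
move=> Ha Hc; move: a Ha; apply: homog_ind.
- by rewrite mul0r; apply: homog0.
- by move=> a1 a2 H1 H2; rewrite mulrDl; apply: homogD.
move=> r w Hw; move: c Hc; apply: homog_ind.
- by rewrite mulr0; apply: homog0.
- by move=> a1 a2 H1 H2; rewrite mulrDr; apply: homogD.
move=> r' w' Hw'.
have -> : iota r * mono w * (iota r' * mono w') = iota (r * twl w r') * mono (w ++ w').
  by rewrite mono_cat iotaM -!mulrA (mulrA (mono w)) monoR !mulrA.
by apply: homog_term; rewrite degw_cat Hw Hw'.
Qed.

Lemma homog_iota r : homog 0 (iota r).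
Proof. by rewrite -[iota r]mulr1 -mono_nil; apply: homog_term; rewrite degw_nil. Qed.

Lemma homog_star_mono w : homog (- degw w) (star (mono w)).
Proof.
elim: w => [|x w IH]; first by rewrite mono_nil star1 degw_nil oppr0 -mono_nil
  -[mono _]mul1r -iota1; apply: homog_term; rewrite degw_nil.
rewrite mono_cons starM.
have -> : degw (x :: w) = degw w + degw [:: x].
  by rewrite addrC -degw_cat.
rewrite opprD; apply: homogM => //.
have -> : star (letter Xp Xm x) = iota 1 * mono [:: (x.1, ~~ x.2)].
  by rewrite iota1 mul1r mono_cons mono_nil mulr1; case: x => i [] /=;
     rewrite /letter /= ?starXp ?starXm.
by apply: homog_term; rewrite degw_flip.
Qed.

Lemma homog_star g a : homog g a -> homog (- g) (star a).
Proof.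
move: a; apply: homog_ind.
- by rewrite star0; apply: homog0.
- by move=> a c Ha Hc; rewrite starD; apply: homogD.
move=> r w <-; rewrite starM starI -[- degw w]addr0.
by apply: homogM; [apply: homog_star_mono | apply: homog_iota].
Qed.


Lemma max_inv (m : R -> Prop) P : is_max_ideal m -> ~ m P -> exists z, m (z * P - 1).
Proof.
case=> [[m0 mB mM] m1 mmax] nP.
pose J x := exists u y, m u /\ x = u + y * P.
have HJ : is_ideal1 J.
  split.
  - by exists 0, 0; rewrite mul0r addr0.
  - move=> x y [u1 [y1 [Hu1 E1]]] [u2 [y2 [Hu2 E2]]]; exists (u1 - u2), (y1 - y2).
    split; first exact: mB.
    by rewrite E1 E2 mulrBl opprD addrACA.
  - move=> r x [u [y [Hu E]]]; exists (r * u), (r * y); split; first exact: mM.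
    by rewrite E mulrDr mulrA.
case: (mmax J HJ) => [x mx|[u [y [Hu E]]]|HJm].
- by exists x, 0; rewrite mul0r addr0.
- exists y; have -> : y * P - 1 = 0 - u.
    by rewrite E opprD addrCA subrr addr0 sub0r.
  exact: mB.
- by exfalso; apply: nP; apply: HJm; exists 0, 1; rewrite mul1r add0r.
Qed.

Lemma wv_scale (M : lmodType A) m (u : M) x :
  weight_vec iota m u -> weight_vec iota m (iota x *: u).
Proof. by move=> Hu r mr; rewrite scalerA iotaC -scalerA Hu // scaler0. Qed.

Lemma wv_inj (M : lmodType A) m (u : M) x : is_max_ideal m -> weight_vec iota m u ->
  ~ m x -> iota x *: u = 0 -> u = 0.
Proof.
move=> Hm Hu nx E; case: (max_inv Hm nx) => z Hz.
have := Hu _ Hz; rewrite iotaB iotaM iota1 scalerBl scale1r -scalerA E scaler0 sub0r.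
by move/eqP; rewrite oppr_eq0 => /eqP.
Qed.

Lemma find_term (M : lmodType A) (v : M) (s : seq (R * seq ('I_n * bool))) :
  (\sum_(p <- s) iota p.1 * mono p.2) *: v != 0 ->
  exists p, List.In p s /\ (iota p.1 * mono p.2) *: v != 0.
Proof.
elim: s => [|p s IH]; first by rewrite big_nil scale0r eqxx.
rewrite big_cons scalerDl => H.
case: (boolP ((iota p.1 * mono p.2) *: v == 0)) => [/eqP E|NE]; last by exists p; split; [left|].
rewrite E add0r in H; case: (IH H) => q [Hq Nq]; exists q; split; [right|]; done.
Qed.

Lemma forward (M : lmodType A) : no_inner_breaks iota Xp Xm star M ->
  forall m, in_supp iota M m -> forall g a, homog g a -> acts_nonzero iota M a m ->
  notin_ideal iota m (star a * a).
Proof.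
move=> NIB m Hm g a Ha [v [Hv Hav]] [r [mr Er]].
have Ha' := Ha; case: Ha' => s [Hs Ea].
have [[p1 p2] [Hp Hbv]] := find_term (s := s) (v := v) (ltac:(by rewrite -Ea)).
simpl in Hbv.
have Hb : homog g (iota p1 * mono p2) by apply: homog_term; exact: (Hs _ Hp).
have nb := NIB m Hm p1 p2 (ex_intro _ v (conj Hv Hbv)).
set b := iota p1 * mono p2 in Hb Hbv nb.
have [P EP] := A0 (ltac:(by rewrite -(addNr g); apply: homogM; [apply: homog_star|]) :
   homog 0 (star b * b)).
have nP : ~ m P by move=> mP; apply: nb; exists P; split.
have [F EF] := A0 (ltac:(by rewrite -(subrr g); apply: homogM; [|apply: homog_star]) :
   homog 0 (a * star b)).
have [G EG] := A0 (ltac:(by rewrite -(addNr g); apply: homogM; [apply: homog_star|]) :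
   homog 0 (star a * b)).
have [z Hz] := max_inv Hm.1 nP.
pose u := iota z *: v.
have Hvu : v = iota P *: u.
  rewrite /u scalerA -iotaM (mulrC P z).
  have := Hv _ Hz; rewrite iotaB iota1 scalerBl scale1r => /eqP; rewrite subr_eq0.
  by move/eqP ->.
have Hu : weight_vec iota m u by apply: wv_scale.
have u0 : u != 0.
  by apply/eqP => u0; move: Hav; rewrite Hvu u0 !scaler0 eqxx.
have Eav : a *: v = (iota F * b) *: u by rewrite {1}Hvu scalerA -EP mulrA EF.
have EF' : iota F = b * star a by rewrite -starI -EF starM starK.
have EG' : iota G = star b * a by rewrite -starI -EG starM starK.
have E1 : iota G *: (iota G *: u) = 0.
  have : (star a * a) *: v = 0 by rewrite -Er; apply: Hv.
  rewrite -scalerA Eav EF' scalerA scalerA.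
  have -> : star a * (b * star a * b) = iota G * iota G by rewrite -EG !mulrA.
  done.
have mG : m G.
  apply: NNPP => nG.
  have u0' := wv_inj Hm.1 Hu nG (wv_inj Hm.1 (wv_scale G Hu) nG E1).
  by rewrite u0' eqxx in u0.
have E2 : (star b * a) *: v = 0 by rewrite -EG'; apply: Hv.
have [F' EF''] : exists F', iota F * b = b * iota F'.
  by exists (twr p2 F); rewrite /b mulrA iotaC -mulrA monoL mulrA.
have E3 : iota P *: (iota F' *: u) = 0.
  by move: E2; rewrite -scalerA Eav EF'' scalerA mulrA EP -scalerA.
have E4 : iota F' *: u = 0 := wv_inj Hm.1 (wv_scale F' Hu) nP E3.
by move: Hav; rewrite Eav EF'' -scalerA E4 scaler0 eqxx.
Qed.

End Main.

Lemma backward (k : fieldType) (R : comAlgType k) (n : nat)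
    (A : nzRingType) (iota : R -> A) (Xp Xm : 'I_n -> A) (star : A -> A)
    (M : lmodType A) :
  (forall m : R -> Prop, in_supp iota M m ->
   forall (g : {ffun 'I_n -> int}) (a : A), homog iota Xp Xm g a ->
     acts_nonzero iota M a m -> notin_ideal iota m (star a * a)) ->
  no_inner_breaks iota Xp Xm star M.
Proof.
move=> H m Hm r w Hn; apply: (H m Hm (degw w)) => //.
by exists [:: (r, w)]; split; [move=> p [<-|[]] | rewrite big_cons big_nil addr0].
Qed.

Theorem mainTheorem12 (k : fieldType) (R : comAlgType k) (n : nat)
    (sh shi : 'I_n -> R -> R) (t : 'I_n -> R)
    (A : nzRingType) (iota : R -> A) (Xp Xm : 'I_n -> A) (star : A -> A)
    (M : lmodType A) :
  TGWA_data sh shi t ->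
  is_TGWA sh shi t iota Xp Xm ->
  is_star iota Xp Xm star ->
  is_weight_module iota M ->
  is_simple M ->
  (no_inner_breaks iota Xp Xm star M <->
   forall m : R -> Prop, in_supp iota M m ->
   forall (g : {ffun 'I_n -> int}) (a : A), homog iota Xp Xm g a ->
     acts_nonzero iota M a m -> notin_ideal iota m (star a * a)).
Proof.
move=> [Haut _ _ _ _] [[iD iM i1 _] [XpR XmR _ _ _] _ A0 _] [sD sM sK sI [sXp sXm]] _ _.
have shK : forall i x, shi i (sh i x) = x.
  by move=> i x; case: (Haut i) => _ _ _ _ [c1 c2]; exact: c1.
have shiK : forall i x, sh i (shi i x) = x.
  by move=> i x; case: (Haut i) => _ _ _ _ [c1 c2]; exact: c2.
split; last exact: backward.
by move=> H; eapply forward; eauto.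
Qed.
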